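(* Let $\mathcal L\in\mathbb{R}^{n_1\times r\times n_3}$, $\mathcal R\in\mathbb{R}^{n_2\times r\times n_3}$ satisfy $\mathcal L^\top*\mathcal L=\mathcal R^\top*\mathcal R$, and let $\mathcal X=\mathcal L*\mathcal R^\top$. Let $\mathcal X_\star=\mathcal U_\star*\mathcal S_\star*\mathcal V_\star^\top$ be a compact t-SVD of $\mathcal X_\star\in\mathbb{R}^{n_1\times n_2\times n_3}$ with tubal rank $r_\star$, and set $\mathcal L_\star=\mathcal U_\star*\mathcal S_\star^{1/2}$, $\mathcal R_\star=\mathcal V_\star*\mathcal S_\star^{1/2}$, $\mathcal F=\begin{bmatrix}\mathcal L\\ \mathcal R\end{bmatrix}$, $\mathcal F_\star=\begin{bmatrix}\mathcal L_\star\\ \mathcal R_\star\end{bmatrix}$. Then $$\|\mathcal F*\mathcal F^\top-\mathcal F_\star*\mathcal F_\star^\top\|_F\le2\|\mathcal X-\mathcal X_\star\|_F.$$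
   Context: For $\mathcal{A}\in\mathbb{R}^{n_1\times n_2\times n_3}$, $\bar{\mathcal A}$ is its discrete Fourier transform along the third mode with frontal slices $\bar A^{(k)}$. The t-product $\mathcal A*\mathcal B$ has Fourier slices $\bar A^{(k)}\bar B^{(k)}$; $\mathcal A^\top$ has Fourier slices $(\bar A^{(k)})^H$; $\mathcal I$ has first frontal slice the identity matrix and the rest zero. $\|\cdot\|_F$ is the entrywise Frobenius norm. Stacking $\begin{bmatrix}\mathcal L\\ \mathcal R\end{bmatrix}\in\mathbb{R}^{(n_1+n_2)\times r\times n_3}$ is along the first mode. A compact t-SVD $\mathcal X_\star=\mathcal U_\star*\mathcal S_\star*\mathcal V_\star^\top$ has $\mathcal U_\star\in\mathbb{R}^{n_1\times r_\star\times n_3}$, $\mathcal V_\star\in\mathbb{R}^{n_2\times r_\star\times n_3}$ with $\mathcal U_\star^\top*\mathcal U_\star=\mathcal V_\star^\top*\mathcal V_\star=\mathcal I$, and $\mathcal S_\star\in\mathbb{R}^{r_\star\times r_\star\times n_3}$ whose Fourier slices are diagonal with nonnegative entries; $\mathcal S_\star^{1/2}$ has Fourier slices the entrywise square roots. Tubal rank $=\max_k\mathrm{rank}(\bar A^{(k)})$. *)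

(* Defs.v *)
From HB Require Import structures.
From mathcomp Require Import all_boot all_order all_algebra.
From mathcomp Require Import reals trigo.
From mathcomp Require Import complex.
Set Implicit Arguments. Unset Strict Implicit. Unset Printing Implicit Defensive.
Import Order.TTheory GRing.Theory Num.Theory.
Local Open Scope ring_scope.

(* A real third-order tensor in R^{n1 x n2 x n3}, given by its n3 frontal
   slices A^(k) (k = 0, ..., n3-1). *)
Definition tensor (R : realType) (n1 n2 n3 : nat) := {ffun 'I_n3 -> 'M[R]_(n1, n2)}.

Section TProduct.
Variable R : realType.
Local Notation C := (R[i]).

(* omega = exp(-2 pi i / n3) *)
Definition omega (n3 : nat) : C :=
  Complex (cos (2 * pi / n3%:R)) (- sin (2 * pi / n3%:R)).

Definition fft n1 n2 n3 (A : tensor R n1 n2 n3) (k : 'I_n3) : 'M[C]_(n1, n2) :=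
  \sum_(j < n3) (omega n3 ^+ (j * k)) *: map_mx (fun x : R => Complex x 0) (A j).

(* inverse DFT; the result is the real tensor with the given Fourier slices
   (real part taken: the Fourier slices produced below are always those of a
   real tensor, i.e. conjugate symmetric). *)
Definition ifft n1 n2 n3 (B : 'I_n3 -> 'M[C]_(n1, n2)) : tensor R n1 n2 n3 :=
  [ffun j : 'I_n3 => map_mx (fun z : C => complex.Re z)
     (n3%:R^-1 *: \sum_(k < n3) ((omega n3)^-1 ^+ (j * k)) *: B k)].

Definition ctr m n (M : 'M[C]_(m, n)) : 'M[C]_(n, m) := (map_mx Num.conj M)^T.

Definition tprod n1 n2 n4 n3 (A : tensor R n1 n2 n3) (B : tensor R n2 n4 n3)
  : tensor R n1 n4 n3 := ifft (fun k => fft A k *m fft B k).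

Definition ttr n1 n2 n3 (A : tensor R n1 n2 n3) : tensor R n2 n1 n3 :=
  ifft (fun k => ctr (fft A k)).

Definition tid n n3 : tensor R n n n3 :=
  [ffun k : 'I_n3 => if (k : nat) == 0%N then 1%:M else 0].

Definition tstack n1 n2 r n3 (L : tensor R n1 r n3) (Rt : tensor R n2 r n3)
  : tensor R (n1 + n2) r n3 := [ffun k => col_mx (L k) (Rt k)].

Definition tfrob n1 n2 n3 (A : tensor R n1 n2 n3) : R :=
  Num.sqrt (\sum_(k < n3) \sum_(i < n1) \sum_(j < n2) (A k i j) ^+ 2).

Definition tsqrt r n3 (S : tensor R r r n3) : tensor R r r n3 :=
  ifft (fun k => map_mx sqrtC (fft S k)).

Definition tubal_rank n1 n2 n3 (A : tensor R n1 n2 n3) : nat :=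
  \max_(k < n3) \rank (fft A k).

Definition fdiag_nonneg r n3 (S : tensor R r r n3) : Prop :=
  forall (k : 'I_n3) (i j : 'I_r),
    (i != j -> fft S k i j = 0) /\ 0 <= fft S k i i.

Definition compact_tsvd n1 n2 rs n3 (Xs : tensor R n1 n2 n3)
  (U : tensor R n1 rs n3) (S : tensor R rs rs n3) (V : tensor R n2 rs n3) : Prop :=
  [/\ Xs = tprod (tprod U S) (ttr V),
      tprod (ttr U) U = tid rs n3,
      tprod (ttr V) V = tid rs n3 &
      fdiag_nonneg S].

End TProduct.

(* Main.v *)
Require Import Defs.
From HB Require Import structures.
From mathcomp Require Import all_boot all_order all_algebra.
From mathcomp Require Import reals trigo.
From mathcomp Require Import complex.
From mathcomp Require Import ring lra.
Import Order.TTheory GRing.Theory Num.Theory.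
Local Open Scope ring_scope.
Set Implicit Arguments. Unset Strict Implicit.


Section Omega.
Variable R : realType.
Local Notation C := (R[i]).
Variable n : nat.
Local Notation w := (omega R n).

Lemma mulC_ (a b c d : R) :
  (Complex a b : C) * Complex c d = Complex (a*c - b*d) (a*d + b*c).
Proof. reflexivity. Qed.

Lemma omegaX m : w ^+ m =
  Complex (cos (m%:R * (2 * pi / n%:R))) (- sin (m%:R * (2 * pi / n%:R))).
Proof.
elim: m => [|m IH]; first by rewrite expr0 mul0r cos0 sin0 oppr0.
rewrite exprSr IH /omega mulC_ -[m.+1]addn1 natrD. rewrite (mulrDl (m%:R)) mul1r cosD sinD.
congr Complex; ring.
Qed.

Hypothesis n_gt0 : (0 < n)%N.

Lemma omega_n : w ^+ n = 1.
Proof.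
rewrite omegaX.
have -> : n%:R * (2 * pi / n%:R) = pi *+ 2 :> R.
  have nz : n%:R != 0 :> R by rewrite pnatr_eq0 -lt0n.
  by rewrite mulr2n; field.
by rewrite cos2pi sin2pi oppr0.
Qed.

Lemma omega_neq1 m : (0 < m < n)%N -> w ^+ m != 1.
Proof.
move=> /andP[m0 mn]; rewrite omegaX.
pose y : R := m%:R * pi / n%:R.
have hy : m%:R * (2 * pi / n%:R) = y *+ 2 by rewrite /y mulr2n; ring.
have n0 : (0:R) < n%:R by rewrite ltr0n.
have y0 : 0 < y < pi.
  apply/andP; split.
    by rewrite /y divr_gt0 // mulr_gt0 ?ltr0n ?pi_gt0.
  rewrite /y ltr_pdivrMr // mulrC ltr_pM2l ?pi_gt0 // ltr_nat //.
rewrite hy cos_mulr2n; apply/negP => /eqP [] h _.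
have : cos y ^+ 2 = 1.
  by move: h => /eqP; rewrite subr_eq -mulr2n -(mulr_natr _ 2) => /eqP; lra.
rewrite cos2sin2 => /eqP; rewrite subr_eq addrC -subr_eq subrr eq_sym sqrf_eq0.
by move/eqP=> s0; move: (sin_gt0_pi y0); rewrite s0 ltxx.
Qed.

Lemma omega_conj : w * conjc w = 1.
Proof.
rewrite /omega /conjc mulC_; apply/eqP; rewrite eq_complex /=; apply/andP; split.
  by apply/eqP; apply: etrans (cos2Dsin2 (2 * pi / n%:R)); ring.
by apply/eqP; ring.
Qed.

Lemma omega_unit : w \is a GRing.unit.
Proof. by apply/unitrPr; exists (conjc w); rewrite omega_conj. Qed.

Lemma omega_conjE : conjc w = w^-1.
Proof. by rewrite -[conjc w]mul1r -(mulVr omega_unit) -mulrA omega_conj mulr1. Qed.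

Lemma omegaX_mod a : w ^+ a = w ^+ (a %% n).
Proof.
by rewrite {1}(divn_eq a n) exprD mulnC exprM omega_n expr1n mul1r.
Qed.

Lemma omegaX_sub k : (k <= n)%N -> w ^+ (n - k)%N = w^-1 ^+ k.
Proof.
move=> kn; have u := unitrX k omega_unit.
apply: (mulIr u); rewrite -exprD subnK // omega_n exprVn mulVr //.
Qed.

Lemma omega_eqX l j : (l < n)%N -> (j < n)%N -> w ^+ l = w ^+ j -> l = j.
Proof.
wlog lj : l j / (l <= j)%N.
  move=> H lt1 lt2 e; case: (leqP l j) => h; first exact: H.
  by symmetry; exact: (H j l (ltnW h) lt2 lt1 (esym e)).
move=> _ jn e; apply/eqP; rewrite eqn_leq lj /=; apply/negP => /negP.
rewrite -ltnNge => lt.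
have : w ^+ (j - l) = 1.
  apply: (mulIr (unitrX l omega_unit)); rewrite -exprD subnK ?mul1r //; exact: ltnW.
apply/eqP; apply: omega_neq1; rewrite subn_gt0 lt /=.
by apply: leq_ltn_trans jn; rewrite leq_subr.
Qed.

Lemma orth (l j : 'I_n) :
  \sum_(k < n) w ^+ (k * l) * w^-1 ^+ (k * j) = (l == j)%:R * n%:R.
Proof.
pose q := w ^+ l * w^-1 ^+ j.
have -> : \sum_(k < n) w ^+ (k * l) * w^-1 ^+ (k * j) = \sum_(k < n) q ^+ k.
  by apply: eq_bigr => k _; rewrite /q exprMn -!exprM !(mulnC k).
have qn : q ^+ n = 1.
  by rewrite /q exprMn -!exprM mulnC exprM omega_n expr1n mulnC exprM exprVn omega_n invr1 expr1n mulr1.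
case: eqP => [e|ne].
  rewrite /q e exprVn mulrV ?unitrX ?omega_unit //.
  by rewrite mul1r (eq_bigr (fun _ => 1)) ?sumr_const ?card_ord // => i _; rewrite expr1n.
have q1 : q - 1 != 0.
  rewrite subr_eq0 /q exprVn; apply/negP => /eqP e.
  have e2 : w ^+ l = w ^+ j by rewrite -[w ^+ l](divrK (unitrX j omega_unit)) e mul1r.
  by apply: ne; apply: ord_inj; exact: (@omega_eqX l j (ltn_ord l) (ltn_ord j) e2).
have := subrX1 q n; rewrite qn subrr => /esym/eqP; rewrite mulf_eq0 (negbTE q1) /=.
by move/eqP->; rewrite mul0r.
Qed.

End Omega.

Arguments omegaX_mod {R n}.
Arguments omegaX_sub {R n}.
Arguments omega_unit {R n}.
Arguments omega_conjE {R n}.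
Arguments orth {R n}.
Arguments omega_n {R n}.

Definition negk n (k : 'I_n) : 'I_n :=
  Ordinal (ltn_pmod (n - k)%N (leq_ltn_trans (leq0n k) (ltn_ord k))).

Arguments negk {n}.

Lemma negk_nat n k : (k < n)%N -> ((n - (n - k) %% n) %% n = k)%N.
Proof.
move=> kn.
case: (posnP k) => [->|kp].
  by rewrite subn0 modnn subn0 modnn.
have h1 : (n - k < n)%N by rewrite ltn_subrL kp (leq_ltn_trans (leq0n k) kn).
rewrite (modn_small h1) subKn; last exact: ltnW.
exact: modn_small.
Qed.

Lemma negkK n : involutive (@negk n).
Proof. move=> k; apply: ord_inj; rewrite /negk /=. exact: (negk_nat (ltn_ord k)). Qed.

Lemma negk_inj n : injective (@negk n).
Proof. exact: inv_inj (@negkK n). Qed.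

Lemma realC (R : realType) (z : R[i]) : @conjc R z = z -> Complex (complex.Re z) 0 = z :> R[i].
Proof. by case: z => a b /= [] h; congr Complex; lra. Qed.

Section Fourier.
Variable R : realType.
Local Notation C := (R[i]).
Variable n : nat.
Hypothesis n_gt0 : (0 < n)%N.
Local Notation w := (omega R n).

Lemma cjM (x y : C) : conjc (x * y) = conjc x * conjc y. Proof. exact: rmorphM. Qed.
Lemma cjX (x : C) m : conjc (x ^+ m) = conjc x ^+ m. Proof. exact: rmorphXn. Qed.
Lemma cjV (x : C) : conjc (x^-1) = (conjc x)^-1. Proof. exact: conjc_inv. Qed.
Lemma cj_sum I r (P : pred I) (F : I -> C) :
  conjc (\sum_(i <- r | P i) F i) = \sum_(i <- r | P i) conjc (F i).
Proof. exact: rmorph_sum. Qed.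
Lemma cj_nat m : conjc (m%:R : C) = m%:R. Proof. exact: conjc_nat. Qed.

Lemma omega_negk j (k : 'I_n) : w ^+ (j * negk k) = w^-1 ^+ (j * k).
Proof.
rewrite /= mulnC exprM -(omegaX_mod n_gt0) (omegaX_sub n_gt0) ?(ltnW (ltn_ord k)) //.
by rewrite -exprM mulnC.
Qed.

Lemma omegaV_negk j (k : 'I_n) : w^-1 ^+ (j * negk k) = w ^+ (j * k).
Proof. by rewrite exprVn omega_negk exprVn invrK. Qed.

Lemma fftE n1 n2 (A : tensor R n1 n2 n) k i j :
  fft A k i j = \sum_(l < n) w ^+ (l * k) * Complex (A l i j) 0.
Proof. by rewrite /fft summxE; apply: eq_bigr => l _; rewrite !mxE. Qed.

Definition csym a b (B : 'I_n -> 'M[C]_(a, b)) :=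
  forall k i j, B (negk k) i j = conjc (B k i j).

Lemma fft_csym n1 n2 (A : tensor R n1 n2 n) : csym (fft A).
Proof.
move=> k i j; rewrite !fftE cj_sum; apply: eq_bigr => l _.
rewrite cjM cjX omega_negk omega_conjE.
by congr (_ * _); rewrite /conjc oppr0.
Qed.

Lemma csym_mul a b c (B : 'I_n -> 'M[C]_(a, b)) (D : 'I_n -> 'M[C]_(b, c)) :
  csym B -> csym D -> csym (fun k => B k *m D k).
Proof.
move=> hB hD k i j; rewrite !mxE cj_sum; apply: eq_bigr => l _.
by rewrite hB hD cjM.
Qed.

Lemma csym_ctr a b (B : 'I_n -> 'M[C]_(a, b)) :
  csym B -> csym (fun k => ctr (B k)).
Proof. by move=> hB k i j; rewrite /ctr !mxE hB. Qed.

End Fourier.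

Section Fourier2.
Variable R : realType.
Local Notation C := (R[i]).
Variable n : nat.
Hypothesis n_gt0 : (0 < n)%N.
Local Notation w := (omega R n).
Lemma fft_ifft a b (B : 'I_n -> 'M[C]_(a, b)) :
  csym B -> forall k, fft (ifft B) k = B k.
Proof.
move=> hB k; apply/matrixP => i j; rewrite fftE.
have nz : n%:R != 0 :> C by rewrite pnatr_eq0 -lt0n.
have Z l : Complex (ifft B l i j) 0 =
    n%:R^-1 * \sum_(k0 < n) w^-1 ^+ (l * k0) * B k0 i j.
  rewrite /ifft ffunE mxE.
  have -> : (n%:R^-1 *: \sum_(k0 < n) w^-1 ^+ (l * k0) *: B k0) i j =
      n%:R^-1 * \sum_(k0 < n) w^-1 ^+ (l * k0) * B k0 i j.
    by rewrite mxE summxE; congr (_ * _); apply: eq_bigr => k0 _; rewrite mxE.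
  apply: realC.
  rewrite cjM cjV cj_nat cj_sum; congr (_ * _).
  rewrite (reindex_inj (@negk_inj n)); apply: eq_bigr => k0 _.
  by rewrite cjM cjX cjV omega_conjE invrK hB conjcK omega_negk.
transitivity (n%:R^-1 * \sum_(k0 < n) B k0 i j *
    \sum_(l < n) w ^+ (l * k) * w^-1 ^+ (l * k0)).
  under eq_bigr => l _ do rewrite Z mulrCA big_distrr /=.
  rewrite -big_distrr /=; congr (_ * _).
  rewrite exchange_big /=; apply: eq_bigr => k0 _.
  rewrite big_distrr /=; apply: eq_bigr => l _.
  ring.
under eq_bigr => k0 _ do rewrite (orth n_gt0).
rewrite (bigD1 k) //= eqxx big1 ?addr0.
  by rewrite mul1r [_ * n%:R]mulrC mulKf.
by move=> k0 /negbTE; rewrite eq_sym => ->; rewrite mul0r mulr0.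
Qed.

End Fourier2.

Section Fourier3.
Variable R : realType.
Local Notation C := (R[i]).
Variable n : nat.
Hypothesis n_gt0 : (0 < n)%N.
Local Notation w := (omega R n).

Lemma rcE (x : R) : Complex x 0 = (x%:C)%C. Proof. by []. Qed.

Lemma fft_sub n1 n2 (A B : tensor R n1 n2 n) k : fft (A - B) k = fft A k - fft B k.
Proof.
apply/matrixP => i j; rewrite !mxE !fftE -sumrB; apply: eq_bigr => l _.
by rewrite !ffunE !mxE !rcE rmorphB mulrBr.
Qed.

Lemma fft_tprod n1 n2 n4 (A : tensor R n1 n2 n) (B : tensor R n2 n4 n) k :
  fft (tprod A B) k = fft A k *m fft B k.
Proof. exact: (fft_ifft n_gt0 (csym_mul (fft_csym n_gt0 A) (fft_csym n_gt0 B))). Qed.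

Lemma fft_ttr n1 n2 (A : tensor R n1 n2 n) k : fft (ttr A) k = ctr (fft A k).
Proof. exact: (fft_ifft n_gt0 (csym_ctr (fft_csym n_gt0 A))). Qed.

Lemma fft_tstack n1 n2 r (A : tensor R n1 r n) (B : tensor R n2 r n) k :
  fft (tstack A B) k = col_mx (fft A k) (fft B k).
Proof.
apply/matrixP => i j; rewrite fftE mxE.
under eq_bigr => l _ do rewrite ffunE mxE.
by case: (split i) => i'; rewrite fftE.
Qed.


Lemma fft_tid m k : fft (tid R m n) k = 1%:M.
Proof.
apply/matrixP => i j; rewrite fftE (bigD1 (Ordinal n_gt0)) //= big1 ?addr0.
  by rewrite mul0n expr0 mul1r ffunE /= !mxE; case: (i == j).
move=> l hl; rewrite ffunE.
have -> : ((l : nat) == 0%N) = false.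
  by apply: negbTE; apply: contra hl => /eqP h; apply/eqP/ord_inj.
by rewrite mxE (_ : Complex 0 0 = 0) ?mulr0.
Qed.


Definition sq n1 n2 (A : tensor R n1 n2 n) : R :=
  \sum_(k < n) \sum_(i < n1) \sum_(j < n2) (A k i j) ^+ 2.
Definition nrm a b (M : 'M[C]_(a, b)) : C := \tr (M *m ctr M).

Lemma nrmE a b (M : 'M[C]_(a, b)) : nrm M = \sum_i \sum_j M i j * conjc (M i j).
Proof.
rewrite /nrm /mxtrace; apply: eq_bigr => i _; rewrite mxE; apply: eq_bigr => j _.
by rewrite /ctr !mxE.
Qed.

Lemma parseval_scalar (a : 'I_n -> R) :
  \sum_(k < n) (\sum_(l < n) w ^+ (l * k) * Complex (a l) 0) *
     conjc (\sum_(l < n) w ^+ (l * k) * Complex (a l) 0)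
  = n%:R * Complex (\sum_(l < n) a l ^+ 2) 0.
Proof.
transitivity (\sum_(k < n) \sum_(l < n) \sum_(l' < n)
   (Complex (a l) 0 * Complex (a l') 0) * (w ^+ (k * l) * w^-1 ^+ (k * l'))).
  apply: eq_bigr => k _; rewrite cj_sum big_distrl /=; apply: eq_bigr => l _.
  rewrite big_distrr /=; apply: eq_bigr => l' _.
  by rewrite cjM cjX omega_conjE !rcE conjc_real (mulnC l k) (mulnC l' k) mulrACA mulrC.
rewrite exchange_big /=.
under eq_bigr => l _ do rewrite exchange_big /=.
under eq_bigr => l _ do under eq_bigr => l' _ do rewrite -big_distrr /= (orth n_gt0).
rewrite rcE rmorph_sum big_distrr /=; apply: eq_bigr => l _.
rewrite (bigD1 l) //= eqxx big1 ?addr0.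
  by rewrite !rcE -rmorphM -expr2 mul1r mulrC.
by move=> l' hl; rewrite eq_sym (negbTE hl) mul0r mulr0.
Qed.

Lemma parseval n1 n2 (A : tensor R n1 n2 n) :
  Complex (sq A) 0 * n%:R = \sum_(k < n) nrm (fft A k).
Proof.
under [RHS]eq_bigr => k _ do rewrite nrmE.
rewrite [RHS]exchange_big /=; under [RHS]eq_bigr => i _ do rewrite exchange_big /=.
have -> : Complex (sq A) 0 = \sum_(k < n) \sum_i \sum_j Complex (A k i j ^+ 2) 0.
  rewrite /sq rcE rmorph_sum; apply: eq_bigr => k _.
  rewrite rmorph_sum; apply: eq_bigr => i _.
  by rewrite rmorph_sum.
rewrite [X in X * _ = _]exchange_big /=.
under eq_bigr => i _ do rewrite exchange_big /=.
rewrite big_distrl /=; apply: eq_bigr => i _.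
rewrite big_distrl /=; apply: eq_bigr => j _.
under [RHS]eq_bigr => k _ do rewrite fftE.
by rewrite parseval_scalar mulrC rcE rmorph_sum.
Qed.

End Fourier3.

Section Slice.
Variable R : realType.
Local Notation C := (R[i]).

Lemma ctrM a b c (A : 'M[C]_(a, b)) (B : 'M[C]_(b, c)) : ctr (A *m B) = ctr B *m ctr A.
Proof. by rewrite /ctr map_mxM trmx_mul. Qed.

Lemma ctrK a b (A : 'M[C]_(a, b)) : ctr (ctr A) = A.
Proof. by apply/matrixP => i j; rewrite /ctr !mxE conjCK. Qed.

Lemma ctrB a b (A B : 'M[C]_(a, b)) : ctr (A - B) = ctr A - ctr B.
Proof. by apply/matrixP => i j; rewrite /ctr !mxE rmorphB. Qed.

Lemma ctr_col a b c (A : 'M[C]_(a, c)) (B : 'M[C]_(b, c)) :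
  ctr (col_mx A B) = row_mx (ctr A) (ctr B).
Proof. by rewrite /ctr map_col_mx tr_col_mx. Qed.

Lemma ctr_block a b c d (A : 'M[C]_(a, c)) (B : 'M[C]_(a, d)) (D : 'M[C]_(b, c)) (E : 'M[C]_(b, d)) :
  ctr (block_mx A B D E) = block_mx (ctr A) (ctr D) (ctr B) (ctr E).
Proof. by rewrite /ctr map_block_mx tr_block_mx. Qed.

Lemma nrm_ctr a b (M : 'M[C]_(a, b)) : nrm (ctr M) = nrm M.
Proof. by rewrite /nrm ctrK mxtrace_mulC. Qed.

Lemma nrm_block a b c d (A : 'M[C]_(a, c)) (B : 'M[C]_(a, d)) (D : 'M[C]_(b, c)) (E : 'M[C]_(b, d)) :
  nrm (block_mx A B D E) = nrm A + nrm B + nrm D + nrm E.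
Proof.
rewrite /nrm ctr_block mulmx_block mxtrace_block !mxtraceD.
by rewrite !addrA.
Qed.

Lemma nrm_ge0 a b (M : 'M[C]_(a, b)) : 0 <= nrm M.
Proof.
rewrite nrmE; apply: sumr_ge0 => i _; apply: sumr_ge0 => j _.
exact: mul_conjC_ge0.
Qed.

Lemma nrmB a b (P Q : 'M[C]_(a, b)) :
  nrm (P - Q) = \tr (P *m ctr P) - \tr (P *m ctr Q) - \tr (Q *m ctr P) + \tr (Q *m ctr Q).
Proof.
rewrite /nrm ctrB mulmxBl !mulmxBr !linearB /=.
by rewrite opprK addrA.
Qed.


Lemma cyc a b c d (W : 'M[C]_(a, b)) (X : 'M[C]_(b, c)) (Y : 'M[C]_(c, d)) (Z : 'M[C]_(d, a)) :
  \tr (W *m X *m Y *m Z) = \tr (Z *m W *m X *m Y).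
Proof. by rewrite mxtrace_mulC !mulmxA. Qed.

Lemma slice_id a b r s (L : 'M[C]_(a, r)) (Rm : 'M[C]_(b, r)) (A : 'M[C]_(a, s)) (B : 'M[C]_(b, s)) :
  ctr L *m L = ctr Rm *m Rm -> ctr A *m A = ctr B *m B ->
  4%:R * nrm (L *m ctr Rm - A *m ctr B)
  - nrm (col_mx L Rm *m ctr (col_mx L Rm) - col_mx A B *m ctr (col_mx A B))
  = 2%:R * nrm (ctr L *m A - ctr Rm *m B).
Proof.
move=> hP hQ.
rewrite !ctr_col !mul_col_row opp_block_mx add_block_mx nrm_block.
have -> : Rm *m ctr L - B *m ctr A = ctr (L *m ctr Rm - A *m ctr B).
  by rewrite ctrB !ctrM !ctrK.
rewrite nrm_ctr !nrmB !ctrM !ctrK !mulmxA.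
pose pp := \tr ((ctr L *m L) *m (ctr L *m L)).
pose qq := \tr ((ctr A *m A) *m (ctr A *m A)).
have T1 : \tr (L *m ctr Rm *m Rm *m ctr L) = pp by rewrite cyc -mulmxA -hP.
have T2 : \tr (L *m ctr Rm *m B *m ctr A) = \tr (ctr Rm *m B *m ctr A *m L) by rewrite [RHS]cyc.
have T3 : \tr (A *m ctr B *m Rm *m ctr L) = \tr (ctr L *m A *m ctr B *m Rm) by rewrite cyc.
have T4 : \tr (A *m ctr B *m B *m ctr A) = qq by rewrite cyc -mulmxA -hQ.
have T5 : \tr (L *m ctr L *m L *m ctr L) = pp by rewrite cyc -mulmxA.
have T6 : \tr (L *m ctr L *m A *m ctr A) = \tr (ctr L *m A *m ctr A *m L) by rewrite [RHS]cyc.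
have T7 : \tr (A *m ctr A *m L *m ctr L) = \tr (ctr L *m A *m ctr A *m L) by rewrite cyc.
have T8 : \tr (A *m ctr A *m A *m ctr A) = qq by rewrite cyc -mulmxA.
have T9 : \tr (Rm *m ctr Rm *m Rm *m ctr Rm) = pp by rewrite cyc -mulmxA -hP.
have T10 : \tr (Rm *m ctr Rm *m B *m ctr B) = \tr (ctr Rm *m B *m ctr B *m Rm) by rewrite [RHS]cyc.
have T11 : \tr (B *m ctr B *m Rm *m ctr Rm) = \tr (ctr Rm *m B *m ctr B *m Rm) by rewrite cyc.
have T12 : \tr (B *m ctr B *m B *m ctr B) = qq by rewrite cyc -mulmxA -hQ.
rewrite T1 T2 T3 T4 T5 T6 T7 T8 T9 T10 T11 T12.
clear T1 T2 T3 T4 T5 T6 T7 T8 T9 T10 T11 T12.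
move: pp qq (\tr (ctr L *m A *m ctr A *m L)) (\tr (ctr L *m A *m ctr B *m Rm))
  (\tr (ctr Rm *m B *m ctr A *m L)) (\tr (ctr Rm *m B *m ctr B *m Rm)) => x1 x2 x3 x4 x5 x6.
ring.
Qed.


End Slice.

Section Sqrt.
Variable R : realType.
Local Notation C := (R[i]).

Lemma cj_ge0 (x : C) : 0 <= x -> conjc x = x.
Proof. exact: geC0_conj. Qed.

Lemma sqrt_facts rs (D : 'M[C]_rs) :
  (forall i j, (i != j -> D i j = 0) /\ 0 <= D i i) ->
  map_mx sqrtC D *m ctr (map_mx sqrtC D) = D /\ ctr (map_mx sqrtC D) *m map_mx sqrtC D = D.
Proof.
move=> hD.
have s0 i j : i != j -> sqrtC (D i j) = 0.
  by move=> ne; rewrite (proj1 (hD i j) ne) sqrtC0.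
have sge i : 0 <= sqrtC (D i i) by rewrite sqrtC_ge0 (proj2 (hD i i)).
have sii i : sqrtC (D i i) * conjc (sqrtC (D i i)) = D i i.
  by rewrite cj_ge0 // -expr2 sqrtCK.
split; apply/matrixP => i j; rewrite !mxE (bigD1 i) //= big1 ?addr0.
- rewrite /ctr !mxE.
  have [<-|ne] := eqVneq i j; first by rewrite -[RHS](sii i).
  by rewrite (s0 j i) 1?eq_sym // rmorph0 mulr0 (proj1 (hD i j) ne).
- by move=> l ne; rewrite /ctr !mxE (s0 i l) 1?eq_sym // mul0r.
- rewrite /ctr !mxE.
  have [<-|ne] := eqVneq i j; first by rewrite -[RHS](sii i) mulrC.
  by rewrite (s0 i j ne) mulr0 (proj1 (hD i j) ne).
- by move=> l ne; rewrite /ctr !mxE (s0 l i) // rmorph0 mul0r.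
Qed.

End Sqrt.

Section Final.
Variable R : realType.
Local Notation C := (R[i]).
Variable n : nat.
Hypothesis n_gt0 : (0 < n)%N.

Lemma fdiag_ge0 rs (S : tensor R rs rs n) : fdiag_nonneg S ->
  forall k i j, 0 <= fft S k i j.
Proof.
move=> hS k i j; have [<-|ne] := eqVneq i j; first exact: (proj2 (hS k i i)).
by rewrite (proj1 (hS k i j) ne).
Qed.

Lemma csym_sqrt rs (S : tensor R rs rs n) : fdiag_nonneg S ->
  csym (fun k => map_mx sqrtC (fft S k)).
Proof.
move=> hS k i j; rewrite !mxE (fft_csym n_gt0) cj_ge0 ?(fdiag_ge0 hS) //.
by rewrite cj_ge0 // sqrtC_ge0 (fdiag_ge0 hS).
Qed.

Lemma fft_tsqrt rs (S : tensor R rs rs n) : fdiag_nonneg S ->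
  forall k, fft (tsqrt S) k = map_mx sqrtC (fft S k).
Proof. by move=> hS; apply: (fft_ifft n_gt0 (csym_sqrt hS)). Qed.

End Final.


Lemma slice_le (R : realType) a b r s (L : 'M[R[i]]_(a, r)) (Rm : 'M[R[i]]_(b, r))
  (A : 'M[R[i]]_(a, s)) (B : 'M[R[i]]_(b, s)) :
  ctr L *m L = ctr Rm *m Rm -> ctr A *m A = ctr B *m B ->
  nrm (col_mx L Rm *m ctr (col_mx L Rm) - col_mx A B *m ctr (col_mx A B))
  <= 4%:R * nrm (L *m ctr Rm - A *m ctr B).
Proof.
move=> hP hQ; rewrite -subr_ge0 (slice_id hP hQ).
by apply: mulr_ge0; [exact: ler0n | exact: nrm_ge0].
Qed.

Lemma main_slice (R : realType) (n1 n2 n3 r rs : nat) (n_gt0 : (0 < n3)%N)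
  (L : tensor R n1 r n3) (Rt : tensor R n2 r n3) (X Xs : tensor R n1 n2 n3)
  (U : tensor R n1 rs n3) (S : tensor R rs rs n3) (V : tensor R n2 rs n3) :
  tprod (ttr L) L = tprod (ttr Rt) Rt ->
  X = tprod L (ttr Rt) ->
  compact_tsvd Xs U S V ->
  forall k,
  let F := tstack L Rt in
  let Fs := tstack (tprod U (tsqrt S)) (tprod V (tsqrt S)) in
  nrm (fft (tprod F (ttr F) - tprod Fs (ttr Fs)) k) <= 4%:R * nrm (fft (X - Xs) k).
Proof.
move=> h1 hX [hXs hU hV hS] k; cbv zeta.
have ft := fft_tprod n_gt0; have fr := fft_ttr n_gt0.
pose s := map_mx sqrtC (fft S k).
have [hs1 hs2] : s *m ctr s = fft S k /\ ctr s *m s = fft S k.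
  by apply: sqrt_facts => i j; exact: (hS k i j).
have hU1 : ctr (fft U k) *m fft U k = 1%:M.
  by have := congr1 (fun T => fft T k) hU; rewrite /= ft fr (fft_tid R n_gt0).
have hV1 : ctr (fft V k) *m fft V k = 1%:M.
  by have := congr1 (fun T => fft T k) hV; rewrite /= ft fr (fft_tid R n_gt0).
rewrite !fft_sub !ft !fr !fft_tstack ?ft ?(fft_tsqrt n_gt0 hS) -/s.
rewrite hX hXs !ft !fr ?ft.
have -> : fft U k *m fft S k *m ctr (fft V k) = (fft U k *m s) *m ctr (fft V k *m s).
  by rewrite ctrM !mulmxA -[fft U k *m s *m ctr s]mulmxA hs1.
apply: slice_le.
  by have := congr1 (fun T => fft T k) h1; rewrite /= !ft !fr.
rewrite !ctrM -!mulmxA (mulmxA (ctr (fft U k))) (mulmxA (ctr (fft V k))) hU1 hV1.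
by rewrite !mul1mx hs2.
Qed.

Unset Implicit Arguments.
Theorem lemma10 (R : realType) (n1 n2 n3 r rs : nat)
  (L : tensor R n1 r n3) (Rt : tensor R n2 r n3) (X Xs : tensor R n1 n2 n3)
  (U : tensor R n1 rs n3) (S : tensor R rs rs n3) (V : tensor R n2 rs n3) :
  tprod (ttr L) L = tprod (ttr Rt) Rt ->
  X = tprod L (ttr Rt) ->
  compact_tsvd Xs U S V ->
  tubal_rank Xs = rs ->
  let F := tstack L Rt in
  let Fs := tstack (tprod U (tsqrt S)) (tprod V (tsqrt S)) in
  tfrob (tprod F (ttr F) - tprod Fs (ttr Fs)) <= 2 * tfrob (X - Xs).
Proof.
move=> h1 hX hsvd _; cbv zeta.
have tfE a b (T : tensor R a b n3) : tfrob T = Num.sqrt (sq T) by [].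
rewrite !tfE.
case: (posnP n3) => [n0|n_gt0].
  have e a b (T : tensor R a b n3) : sq T = 0.
    rewrite /sq big1 // => k _; exfalso; have := ltn_ord k; move: (nat_of_ord k) => m.
    by rewrite n0.
  by rewrite !e sqrtr0 mulr0.
set T1 := (_ - _ : tensor R (n1 + n2) (n1 + n2) n3).
set T2 := (X - Xs).
have key : sq T1 <= 4 * sq T2.
  have : Complex (sq T1) 0 * n3%:R <= Complex (4 * sq T2) 0 * n3%:R.
    have -> : Complex (4 * sq T2) 0 * n3%:R = 4 * (Complex (sq T2) 0 * n3%:R).
      by rewrite !rcE rmorphM rmorph_nat mulrA.
    rewrite !(parseval n_gt0) big_distrr /=; apply: ler_sum => k _.
    by have := main_slice n_gt0 h1 hX hsvd k; cbv zeta.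
  rewrite !rcE -!(rmorph_nat (real_complex R)) -!rmorphM lecR ler_pM2r // ltr0n //.
apply: le_trans (ler_wsqrtr key) _.
rewrite sqrtrM ?ler0n // (_ : 4 = 2 ^+ 2) ?sqrtr_sqr ?ger0_norm //.
by rewrite expr2 -natrM.
Qed.
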